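(* Let $G\simeq G'\rtimes A$ be a Frobenius group whose Frobenius kernel is the commutator subgroup $G'$ and with (necessarily abelian) Frobenius complement $A$. Then for every $x\in G\setminus G'$ one has $\mathrm{nr}(x)\notin\mathbb{Z}[G]$.
   Context: A Frobenius group is a finite group $G$ with a proper nontrivial subgroup $H$ (a Frobenius complement) such that $H\cap gHg^{-1}=\{1\}$ for all $g\in G\setminus H$; then there is a unique normal subgroup $N$ (the Frobenius kernel) with $G=N\rtimes H$. $\mathrm{nr}$ denotes the reduced norm of $\mathbb{Q}[G]$, with values in $\zeta(\mathbb{Q}[G])\subseteq\mathbb{Q}[G]$. *)

(* Defs.v *)
From mathcomp Require Import all_boot all_order all_algebra all_fingroup all_solvable all_field all_character frobenius.
Set Implicit Arguments. Unset Strict Implicit. Unset Printing Implicit Defensive.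
Import GRing.Theory Num.Theory.
Local Open Scope ring_scope.

(* Reduced norm of a group element x of G, viewed as an element of Q[G].
   After extension of scalars to algC, Q[G] (x) C = C[G] = prod_chi M_{chi(1)}(C),
   with central primitive idempotents
     e_chi = chi(1)/|G| * sum_g chi(g^-1) g,
   and the reduced norm is the determinant in each simple component:
     nr(x) = sum_chi det(rho_chi(x)) e_chi,
   where det(rho_chi(x)) = (cfDet chi) x.
   [nr_coef G x g] is the coefficient of g in nr(x) (an element of C[G]). *)
Definition nr_coef (gT : finGroupType) (G : {group gT}) (x g : gT) : algC :=
  \sum_(i : Iirr G)
     (cfDet 'chi[G]_i) x * ('chi[G]_i 1%g * 'chi[G]_i (g^-1)%g) / #|G|%:R.

Definition nr_in_ZG (gT : finGroupType) (G : {group gT}) (x : gT) : Prop :=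
  forall g : gT, g \in G -> nr_coef G x g \in Num.int.

(* Main.v *)
Require Import Defs.
From mathcomp Require Import all_boot all_order all_algebra all_fingroup all_solvable all_field all_character frobenius.
From mathcomp Require Import ring.

Section Helpers.
Import GRing.Theory Num.Theory.
Local Open Scope ring_scope.

Lemma nr_inv (gT : finGroupType) (G : {group gT}) (x : gT) (j : Iirr G) :
  \sum_(g in G) nr_coef G x g * 'chi_j g = cfDet 'chi_j x * 'chi_j 1%g.
Proof.
rewrite /nr_coef.
under eq_bigr => g _ do rewrite mulr_suml.
rewrite exchange_big /=.
have E : forall i : Iirr G, \sum_(g in G)
   (cfDet 'chi_i x * ('chi_i 1%g * 'chi_i g^-1%g) / #|G|%:R) * 'chi_j g
   = cfDet 'chi_i x * 'chi_i 1%g * '['chi_j, 'chi_i].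
  move=> i; rewrite cfdotE mulr_sumr mulr_sumr; apply: eq_bigr => g _.
  rewrite irr_inv; ring.
under eq_bigr => i _ do rewrite E cfdot_irr.
rewrite (bigD1 j) //= big1 ?addr0; first by rewrite eqxx mulr1.
by move=> i /negbTE; rewrite eq_sym => ->; rewrite mulr0.
Qed.

Lemma nr_norm (gT : finGroupType) (G : {group gT}) (x : gT) : x \in G ->
  \sum_(g in G) nr_coef G x g * (nr_coef G x g)^* = 1.
Proof.
move=> Gx.
have C : forall g, (nr_coef G x g)^* =
   \sum_(i : Iirr G) (cfDet 'chi_i x * 'chi_i 1%g / #|G|%:R)^* * 'chi_i g.
  move=> g; rewrite /nr_coef rmorph_sum; apply: eq_bigr => i _.
  rewrite !rmorphM /= irr_inv conjCK; ring.
under eq_bigr => g _ do rewrite C mulr_sumr.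
rewrite exchange_big /=.
under eq_bigr => i _ do
  (under eq_bigr => g _ do rewrite mulrCA; rewrite -mulr_sumr nr_inv).
have N : forall i : Iirr G, (cfDet 'chi_i x)^* * cfDet 'chi_i x = 1.
  move=> i; rewrite mulrC -normCK normC_lin_char ?expr1n //.
  exact: cfDet_lin_char.
transitivity (\sum_(i : Iirr G) ('chi_i 1%g) ^+ 2 / #|G|%:R).
  apply: eq_bigr => i _.
  have R1 : ('chi_i 1%g)^* = 'chi_i 1%g by rewrite irr1_degree rmorph_nat.
  rewrite !rmorphM /= fmorphV /= rmorph_nat R1.
  rewrite -[RHS]mul1r -(N i); ring.
by rewrite -mulr_suml irr_sum_square mulfV // neq0CG.
Qed.

End Helpers.

Section Main.
Import GRing.Theory Num.Theory.
Local Open Scope ring_scope.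

Lemma main_aux (gT : finGroupType) (G A : {group gT}) (x : gT) :
  [Frobenius G = G^`(1) ><| A]%g ->
  (x \in G :\: G^`(1))%g ->
  ~ nr_in_ZG G x.
Proof.
move=> frobG /setDP[Gx notG'x] ZG.
set c := nr_coef G x.
have cint g : g \in G -> c g \in Num.int := ZG g.
have S : \sum_(g in G) c g ^+ 2 = 1.
  rewrite -(@nr_norm _ G x Gx); apply: eq_bigr => g Gg; by rewrite expr2 conj_intr //; apply: cint.
have [g0 Gg0 nz0] : exists2 g0, g0 \in G & c g0 != 0.
  case: (pickP [pred g in G | c g != 0]) => [g0 /andP[]|H]; first by exists g0.
  move: S; rewrite big1 ; last first.
    move=> g Gg.
    by move: (H g); rewrite /= Gg /= => /negbFE/eqP ->; rewrite expr2 mulr0.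
  by move/eqP; rewrite eq_sym oner_eq0.
move: S; rewrite (bigD1 g0) //=.
set r := \sum_(g in G | g != g0) c g ^+ 2 => S.
have ge1 : 1 <= c g0 ^+ 2 by apply: sqr_intr_ge1; rewrite ?cint.
have sq0 g : g \in G -> 0 <= c g ^+ 2.
  by move=> Gg; rewrite -intr_normK ?cint // exprn_ge0.
have ge0 : 0 <= r by apply: sumr_ge0 => g /andP[Gg _]; apply: sq0.
have r0 : r = 0.
  apply/eqP; rewrite Order.POrderTheory.eq_le ge0 andbT.
  have -> : r = 1 - c g0 ^+ 2 by rewrite -S addrAC subrr add0r.
  by rewrite subr_le0.
have others g : g \in G -> g != g0 -> c g = 0.
  move=> Gg ne; apply/eqP; have <- : (0 < 2)%N && (c g == 0) = (c g == 0) by []. rewrite -expf_eq0; apply/eqP.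
  apply: (psumr_eq0P _ r0); last by rewrite Gg ne.
  by move=> i /andP[Gi _]; apply: sq0.
have inv (j : Iirr G) : c g0 * 'chi_j g0 = cfDet 'chi_j x * 'chi_j 1%g.
  rewrite -nr_inv (bigD1 g0) //= big1 ?addr0 // => g /andP[Gg ne].
  by rewrite -/c (others g Gg ne) mul0r.
have c1 : c g0 = 1.
  have := inv 0; rewrite irr0 !cfun1E Gg0 group1 mulr1 cfDet_id ?cfun1_lin_char //.
  by rewrite ?cfun1E ?cfun1Egen Gx mulr1.
have Zg0 : g0 \in 'Z(G)%g.
  rewrite -cap_cfcenter_irr; apply/bigcapP => i _; rewrite irr_cfcenterE //.
  rewrite -[_ g0]mul1r -c1 inv normrM normC_lin_char ?cfDet_lin_char // mul1r.
  by rewrite ger0_norm // Order.POrderTheory.ltW // irr1_gt0.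
have g01 : g0 = 1%g.
  have [_ ntK _ ltKG _] := Frobenius_context frobG.
  have /centerP[_ cg0] := Zg0.
  have [k Kk] : exists k, k \in (G^`(1))^#%g.
    by apply/set0Pn; rewrite setD_eq0 subG1.
  have Gk : k \in G by move: Kk => /setD1P[_ Kk]; apply: (subsetP (der_sub 1 G)).
  have g0K : g0 \in G^`(1)%g.
    apply: (subsetP (Frobenius_cent1_ker frobG Kk)).
    by rewrite inE Gg0; apply/cent1P; apply: cg0.
  apply/eqP; apply: contraLR ltKG => ng0.
  have K1g0 : g0 \in (G^`(1))^#%g by apply/setD1P; split.
  rewrite properE negb_and negbK; apply/orP; right.
  apply/subsetP => y Gy; apply: (subsetP (Frobenius_cent1_ker frobG K1g0)).
  by rewrite inE Gy; apply/cent1P; apply/esym; apply: cg0.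
have [i sK nxK] : exists2 i : Iirr G, (G^`(1) \subset cfker 'chi_i)%g & x \notin cfker 'chi_i.
  case: (pickP [pred i : Iirr G | (G^`(1) \subset cfker 'chi[G]_i)%g && (x \notin cfker 'chi_i)]) => [i /andP[]|none]; first by exists i.
  elim: (negP notG'x); rewrite -(cap_cfker_normal (der_normal 1 G)).
  apply/bigcapP => i sK; move: (none i); rewrite /= sK /=; exact: negbFE.
have lin : 'chi_i \is a linear_char by rewrite lin_irr_der1.
have := inv i; rewrite c1 g01 mul1r cfDet_id // lin_char1 // => E.
by move: E; rewrite mulr1 => E; move: nxK; rewrite cfkerEirr inE -E lin_char1 // eqxx.
Qed.

End Main.

Theorem lemma3p12 (gT : finGroupType) (G A : {group gT}) (x : gT) :
  [Frobenius G = G^`(1) ><| A]%g ->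
  (x \in G :\: G^`(1))%g ->
  ~ nr_in_ZG G x.
Proof. exact: main_aux. Qed.
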